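(* Consider the discrete setting described in the context, with a fixed constant $\rho_\infty^*>0$, and let $(f^n_{ij},g^n_{ij})_{n\ge0,\,i\in\mathcal I,\,j\in\mathcal J}$ be a solution of the linearized scheme: for all $n\ge0$, $i\in\mathcal I$, $j\in\mathcal J$, $$\frac{f^{n+1}_{ij}-f^n_{ij}}{\Delta t}+\frac{1}{\Delta x\,\Delta v}\big(\mathcal F^{n+1}_{i+\frac12,j}-\mathcal F^{n+1}_{i-\frac12,j}\big)=-\rho_\infty^*\chi_{1,j}\rho^{n+1}_{g,i}-(\rho_\infty^* )^{-1}f^{n+1}_{ij},$$ $$\frac{g^{n+1}_{ij}-g^n_{ij}}{\Delta t}+\frac{1}{\Delta x\,\Delta v}\big(\mathcal G^{n+1}_{i+\frac12,j}-\mathcal G^{n+1}_{i-\frac12,j}\big)=-(\rho_\infty^* )^{-1}\chi_{2,j}\rho^{n+1}_{f,i}-\rho_\infty^*\,g^{n+1}_{ij}.$$ Then, writing $F^n=(f^n_{ij},g^n_{ij})_{i,j}$, for all $n\ge0$, $$\frac12\left(\|F^{n+1}\|_\Delta^2-\|F^n\|_\Delta^2\right)+\Delta t\,C^*_{mc}\,\|(I-\Pi^\Delta)F^{n+1}\|_\Delta^2\le 0,\qquad C^*_{mc}=\min\big((\rho_\infty^* )^{-1},\rho_\infty^*\big).$$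
   Context: Space mesh: the torus $\mathbb T$ is divided into $N$ uniform cells of length $\Delta x$, indexed by $i\in\mathcal I=\mathbb Z/N\mathbb Z$ (periodic indexing). Velocity mesh: for $v^*>0$ and an integer $L\ge1$, $\Delta v=v^*/L$, the $2L$ velocity cells of length $\Delta v$ partitioning $[-v^*,v^*]$ are indexed by $j\in\mathcal J=\{-L+1,\dots,L\}$ with midpoints $v_j=(j-\tfrac12)\Delta v$ (so $v_{1-j}=-v_j$). Time step $\Delta t>0$, $t^n=n\Delta t$; $\lambda=\Delta x/(2\Delta t)$ is a fixed positive constant. Discrete velocity profiles: for $k=1,2$, $(\chi_{k,j})_{j\in\mathcal J}$ with $\chi_{k,j}>0$, $\chi_{k,j}=\chi_{k,1-j}$, $\sum_{j}\Delta v\,\chi_{k,j}=1$, and $0<\underline D_k\le D_k^\Delta:=\sum_j\Delta v\,v_j^2\chi_{k,j}\le\overline D_k$, $Q_k^\Delta:=\sum_j\Delta v\,v_j^4\chi_{k,j}\le\overline Q_k$ for given constants. Densities: $\rho_{f,i}=\sum_j\Delta v\,f_{ij}$, $\rho_{g,i}=\sum_j\Delta v\,g_{ij}$. Lax–Friedrichs fluxes: $\mathcal F^{n+1}_{i+\frac12,j}=\Delta v\frac{v_j}{2}(f^{n+1}_{i+1,j}+f^{n+1}_{ij})-\Delta v\,\lambda(f^{n+1}_{i+1,j}-f^{n+1}_{ij})$, and $\mathcal G$ the same with $g$ in place of $f$. Weighted scalar product for $F_k=(f_{k,ij},g_{k,ij})_{i,j}$: $\langle F_1,F_2\rangle_\Delta=\sum_{i,j}\Delta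 x\,\Delta v\big(\frac{f_{1,ij}f_{2,ij}}{\chi_{1,j}\rho_\infty^*}+\frac{g_{1,ij}g_{2,ij}\rho_\infty^*}{\chi_{2,j}}\big)$ with norm $\|\cdot\|_\Delta$. Projection: $(\Pi^\Delta F)_{ij}=\frac{\rho_{f,i}-\rho_{g,i}}{(\rho_\infty^* )^2+1}\big((\rho_\infty^* )^2\chi_{1,j},\,-\chi_{2,j}\big)$. *)

(* Defs.v *)
From mathcomp Require Import all_boot all_order all_algebra.
From mathcomp Require Import reals.
Set Implicit Arguments. Unset Strict Implicit. Unset Printing Implicit Defensive.
Import Order.TTheory GRing.Theory Num.Theory.
Local Open Scope ring_scope.

(* Space index i : 'I_N (periodic: i+1 = ordS i, i-1 = ord_pred i).
   Velocity index k : 'I_(2*L) encodes the paper's j = k - L + 1 in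
   {-L+1,...,L}; hence v_j = (j - 1/2) dv = (k - L + 1/2) dv, and the
   symmetry j |-> 1 - j is k |-> rev_ord k. *)

Definition grid (R : realType) (N M : nat) := 'I_N -> 'I_M -> R.

Definition vel (R : realType) (L : nat) (dv : R) (k : 'I_(2 * L)) : R :=
  ((k : nat)%:R - L%:R + 2^-1) * dv.

Definition dens (R : realType) (N L : nat) (dv : R) (h : grid R N (2 * L))
  (i : 'I_N) : R := \sum_(k < 2 * L) dv * h i k.

(* Lax-Friedrichs flux at interface i + 1/2, lambda = dx / (2 dt) *)
Definition LFflux (R : realType) (N L : nat) (dx dv dt : R)
  (h : grid R N (2 * L)) (i : 'I_N) (k : 'I_(2 * L)) : R :=
  dv * (vel dv k / 2) * (h (ordS i) k + h i k)
  - dv * (dx / (2 * dt)) * (h (ordS i) k - h i k).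

Definition scheme (R : realType) (N L : nat) (dx dv dt rs : R)
  (chi1 chi2 : 'I_(2 * L) -> R) (f g : nat -> grid R N (2 * L)) : Prop :=
  forall (n : nat) (i : 'I_N) (k : 'I_(2 * L)),
    (f n.+1 i k - f n i k) / dt
      + (LFflux dx dv dt (f n.+1) i k - LFflux dx dv dt (f n.+1) (ord_pred i) k)
        / (dx * dv)
    = - rs * chi1 k * dens dv (g n.+1) i - rs^-1 * f n.+1 i k
  /\
    (g n.+1 i k - g n i k) / dt
      + (LFflux dx dv dt (g n.+1) i k - LFflux dx dv dt (g n.+1) (ord_pred i) k)
        / (dx * dv)
    = - rs^-1 * chi2 k * dens dv (f n.+1) i - rs * g n.+1 i k.

Definition dotD (R : realType) (N L : nat) (dx dv rs : R)
  (chi1 chi2 : 'I_(2 * L) -> R) (F1 F2 : grid R N (2 * L) * grid R N (2 * L)) : R :=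
  \sum_(i < N) \sum_(k < 2 * L)
     dx * dv * (F1.1 i k * F2.1 i k / (chi1 k * rs)
                + F1.2 i k * F2.2 i k * rs / chi2 k).

Definition normD (R : realType) (N L : nat) (dx dv rs : R)
  (chi1 chi2 : 'I_(2 * L) -> R) (F : grid R N (2 * L) * grid R N (2 * L)) : R :=
  Num.sqrt (dotD dx dv rs chi1 chi2 F F).

Definition PiD (R : realType) (N L : nat) (dv rs : R)
  (chi1 chi2 : 'I_(2 * L) -> R) (F : grid R N (2 * L) * grid R N (2 * L))
  : grid R N (2 * L) * grid R N (2 * L) :=
  ((fun i k => (dens dv F.1 i - dens dv F.2 i) / (rs ^+ 2 + 1) * (rs ^+ 2 * chi1 k)),
   (fun i k => (dens dv F.1 i - dens dv F.2 i) / (rs ^+ 2 + 1) * (- chi2 k))).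

Definition IminusPiD (R : realType) (N L : nat) (dv rs : R)
  (chi1 chi2 : 'I_(2 * L) -> R) (F : grid R N (2 * L) * grid R N (2 * L))
  : grid R N (2 * L) * grid R N (2 * L) :=
  ((fun i k => F.1 i k - (PiD dv rs chi1 chi2 F).1 i k),
   (fun i k => F.2 i k - (PiD dv rs chi1 chi2 F).2 i k)).

Definition profile (R : realType) (L : nat) (dv Dlo Dhi Qhi : R)
  (chi : 'I_(2 * L) -> R) : Prop :=
  (forall k, 0 < chi k) /\ (forall k, chi (rev_ord k) = chi k) /\
  \sum_(k < 2 * L) dv * chi k = 1 /\
  0 < Dlo /\ Dlo <= \sum_(k < 2 * L) dv * vel dv k ^+ 2 * chi k /\
  \sum_(k < 2 * L) dv * vel dv k ^+ 2 * chi k <= Dhi /\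
  \sum_(k < 2 * L) dv * vel dv k ^+ 4 * chi k <= Qhi.

(* Main.v *)
Require Import Defs.
From mathcomp Require Import all_boot all_order all_algebra.
From mathcomp Require Import reals ring lra.
Import Order.TTheory GRing.Theory Num.Theory.
Local Open Scope ring_scope.
Lemma flux_nonneg (R : realType) (N : nat) (dv v lam : R) (h Phi : 'I_N -> R) :
  0 <= dv -> 0 <= lam ->
  (forall i, Phi i = dv * (v / 2) * (h (ordS i) + h i) - dv * lam * (h (ordS i) - h i)) ->
  0 <= \sum_(i < N) (Phi i - Phi (ord_pred i)) * h i.
Proof.
move=> dv0 lam0 HP.
have E1 : \sum_(i < N) Phi (ord_pred i) * h i = \sum_(i < N) Phi i * h (ordS i).
  by rewrite (reindex_inj (@ordS_inj N)) /=; apply: eq_bigr => i _; rewrite ordSK.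
have E2 : \sum_(i < N) h (ordS i) ^+ 2 = \sum_(i < N) h i ^+ 2.
  by rewrite [RHS](reindex_inj (@ordS_inj N)).
have E3 : \sum_(i < N) (Phi i - Phi (ord_pred i)) * h i =
   \sum_(i < N) (dv * lam * (h (ordS i) - h i) ^+ 2) + dv * (v / 2) * (\sum_(i < N) h i ^+ 2 - \sum_(i < N) h (ordS i) ^+ 2).
  have -> : \sum_(i < N) (Phi i - Phi (ord_pred i)) * h i =
     \sum_(i < N) Phi i * h i - \sum_(i < N) Phi (ord_pred i) * h i.
    by rewrite -sumrB; apply: eq_bigr => i _; ring.
  rewrite E1 -!sumrB mulr_sumr -big_split /=; apply: eq_bigr => i _; rewrite HP.
  ring.
rewrite E3 E2 subrr mulr0 addr0; apply: sumr_ge0 => i _.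
by apply: mulr_ge0; [apply: mulr_ge0 | apply: sqr_ge0].
Qed.
Lemma var_ge0 (R : realType) M (dv : R) (chi a : 'I_M -> R) :
  0 <= dv -> (forall k, 0 < chi k) -> \sum_(k < M) dv * chi k = 1 ->
  (\sum_(k < M) dv * a k) ^+ 2 <= \sum_(k < M) dv * (a k ^+ 2 / chi k).
Proof.
move=> dv0 chi0 s1.
have [P EP] : exists P, P = \sum_(k < M) dv * a k by eexists.
rewrite -EP.
have H : 0 <= \sum_(k < M) dv * ((a k - P * chi k) ^+ 2 / chi k).
  apply: sumr_ge0 => k _; apply: mulr_ge0 => //; apply: divr_ge0; first exact: sqr_ge0.
  exact: ltW.
have E : \sum_(k < M) dv * ((a k - P * chi k) ^+ 2 / chi k) =
   \sum_(k < M) dv * (a k ^+ 2 / chi k) - (2 * P) * (\sum_(k < M) dv * a k) + P ^+ 2 * (\sum_(k < M) dv * chi k).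
  rewrite !mulr_sumr -!sumrB -big_split /=; apply: eq_bigr => k _.
  have := chi0 k; rewrite lt0r => /andP [ck _]. field. done.
rewrite -EP s1 in E. 
rewrite E in H; lra.
Qed.

Lemma coll_i (R : realType) M (dx dv rs m P Q u : R) (chi1 chi2 a c : 'I_M -> R) :
  0 < dx -> 0 <= dv -> 0 < rs -> 0 <= m -> m <= rs^-1 -> m <= rs ->
  (forall k, 0 < chi1 k) -> (forall k, 0 < chi2 k) ->
  \sum_(k < M) dv * chi1 k = 1 -> \sum_(k < M) dv * chi2 k = 1 ->
  P = \sum_(k < M) dv * a k -> Q = \sum_(k < M) dv * c k ->
  u = (P - Q) / (rs ^+ 2 + 1) ->
  \sum_(k < M) dx * dv * ((- rs * chi1 k * Q - rs^-1 * a k) * a k / (chi1 k * rs)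
       + (- rs^-1 * chi2 k * P - rs * c k) * c k * rs / chi2 k)
  + m * \sum_(k < M) dx * dv * ((a k - u * (rs ^+ 2 * chi1 k)) * (a k - u * (rs ^+ 2 * chi1 k)) / (chi1 k * rs)
       + (c k - u * (- chi2 k)) * (c k - u * (- chi2 k)) * rs / chi2 k) <= 0.
Proof.
move=> dx0 dv0 rs0 m0 m1 m2 c1 c2 s1 s2 EP EQ Eu.
have VA := @var_ge0 _ _ _ _ a dv0 c1 s1; have VB := @var_ge0 _ _ _ _ c dv0 c2 s2.
rewrite -EP in VA; rewrite -EQ in VB.
have rsn : rs != 0 by rewrite gt_eqF.
have E1 : \sum_(k < M) dx * dv * ((- rs * chi1 k * Q - rs^-1 * a k) * a k / (chi1 k * rs)
       + (- rs^-1 * chi2 k * P - rs * c k) * c k * rs / chi2 k)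
   = dx * ((- Q) * (\sum_(k < M) dv * a k) - rs ^- 2 * (\sum_(k < M) dv * (a k ^+ 2 / chi1 k))
      - P * (\sum_(k < M) dv * c k) - rs ^+ 2 * (\sum_(k < M) dv * (c k ^+ 2 / chi2 k))).
  rewrite !mulr_sumr -!sumrB !mulr_sumr; apply: eq_bigr => k _.
  have := c1 k; rewrite lt0r => /andP [ck1 _].
  have := c2 k; rewrite lt0r => /andP [ck2 _].
  field; apply/and3P; split => //.
have E2 : \sum_(k < M) dx * dv * ((a k - u * (rs ^+ 2 * chi1 k)) * (a k - u * (rs ^+ 2 * chi1 k)) / (chi1 k * rs)
       + (c k - u * (- chi2 k)) * (c k - u * (- chi2 k)) * rs / chi2 k)
   = dx * (rs^-1 * (\sum_(k < M) dv * (a k ^+ 2 / chi1 k)) - (2 * u * rs) * (\sum_(k < M) dv * a k)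
       + (u ^+ 2 * rs ^+ 3) * (\sum_(k < M) dv * chi1 k) + rs * (\sum_(k < M) dv * (c k ^+ 2 / chi2 k))
       + (2 * u * rs) * (\sum_(k < M) dv * c k) + (u ^+ 2 * rs) * (\sum_(k < M) dv * chi2 k)).
  rewrite !mulr_sumr -!sumrB -!big_split /= !mulr_sumr; apply: eq_bigr => k _.
  have := c1 k; rewrite lt0r => /andP [ck1 _].
  have := c2 k; rewrite lt0r => /andP [ck2 _].
  field; apply/and3P; split => //.
rewrite E1 E2 -EP -EQ s1 s2.
move: VA VB.
set A := \sum_(k < M) dv * (a k ^+ 2 / chi1 k).
set B := \sum_(k < M) dv * (c k ^+ 2 / chi2 k).
move=> VA VB.
have rs2 : rs ^+ 2 + 1 != 0 by rewrite gt_eqF //; have := sqr_ge0 rs; lra.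
have -> : dx * (- Q * P - rs ^- 2 * A - P * Q - rs ^+ 2 * B) +
  m * (dx * (rs^-1 * A - 2 * u * rs * P + u ^+ 2 * rs ^+ 3 * 1 + rs * B + 2 * u * rs * Q + u ^+ 2 * rs * 1))
  = - dx * ((A - P ^+ 2) * (rs^-1 * (rs^-1 - m)) + (B - Q ^+ 2) * (rs * (rs - m))
           + (P / rs + rs * Q) ^+ 2 * ((rs ^+ 2 + 1 - m * rs) / (rs ^+ 2 + 1))).
  rewrite Eu; field; by apply/andP.
rewrite mulNr oppr_le0; apply: mulr_ge0; first exact: ltW.
have mrs : m * rs <= 1.
  by have := ler_wpM2r (ltW rs0) m1; rewrite mulVf.
apply: addr_ge0; first apply: addr_ge0.
- apply: mulr_ge0; first lra. apply: mulr_ge0; first by rewrite invr_ge0 ltW. lra.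
- apply: mulr_ge0; first lra. apply: mulr_ge0; first exact: ltW. lra.
- apply: mulr_ge0; first exact: sqr_ge0. apply: divr_ge0.
  + have : 0 <= rs ^+ 2 by exact: sqr_ge0. lra.
  + have : 0 <= rs ^+ 2 by exact: sqr_ge0. lra.
Qed.

Lemma dotD_ge0 (R : realType) (N L : nat) (dx dv rs : R)
  (chi1 chi2 : 'I_(2 * L) -> R) (F : grid R N (2 * L) * grid R N (2 * L)) :
  0 < dx -> 0 <= dv -> 0 < rs -> (forall k, 0 < chi1 k) -> (forall k, 0 < chi2 k) ->
  0 <= dotD dx dv rs chi1 chi2 F F.
Proof.
move=> dx0 dv0 rs0 c1 c2; apply: sumr_ge0 => i _; apply: sumr_ge0 => k _.
apply: mulr_ge0; first by apply: mulr_ge0 => //; exact: ltW.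
apply: addr_ge0.
- by apply: divr_ge0; [exact: sqr_ge0 | apply: mulr_ge0; exact: ltW].
- by apply: divr_ge0; [apply: mulr_ge0; [exact: sqr_ge0 | exact: ltW] | exact: ltW].
Qed.

Theorem lemma4p1 (R : realType) (N L : nat) (vstar dx dv dt rs : R)
  (chi1 chi2 : 'I_(2 * L) -> R) (D1lo D1hi Q1hi D2lo D2hi Q2hi : R)
  (f g : nat -> grid R N (2 * L)) :
  (0 < N)%N -> (1 <= L)%N -> 0 < vstar -> dv = vstar / L%:R ->
  0 < dx -> 0 < dt -> 0 < rs ->
  profile dv D1lo D1hi Q1hi chi1 -> profile dv D2lo D2hi Q2hi chi2 ->
  scheme dx dv dt rs chi1 chi2 f g ->
  forall n : nat,
    2^-1 * (normD dx dv rs chi1 chi2 (f n.+1, g n.+1) ^+ 2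
            - normD dx dv rs chi1 chi2 (f n, g n) ^+ 2)
    + dt * Num.min rs^-1 rs
      * normD dx dv rs chi1 chi2
          (IminusPiD dv rs chi1 chi2 (f n.+1, g n.+1)) ^+ 2
    <= 0.
Proof.
move=> N0 L1 vs0 Edv dx0 dt0 rs0 [c1 [_ [s1 _]]] [c2 [_ [s2 _]]] Hs n.
have dv0 : 0 < dv by rewrite Edv divr_gt0 // ltr0n.
have dvn : dv != 0 by rewrite gt_eqF.
have dxn : dx != 0 by rewrite gt_eqF.
have dtn : dt != 0 by rewrite gt_eqF.
have rsn : rs != 0 by rewrite gt_eqF.
rewrite /normD !sqr_sqrtr; try exact: dotD_ge0 (ltW dv0) rs0 c1 c2.
set m := Num.min rs^-1 rs.
have m0 : 0 <= m by rewrite le_min invr_ge0 !ltW.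
have m1 : m <= rs^-1 by rewrite ge_min lexx.
have m2 : m <= rs by rewrite ge_min lexx orbT.
set a := f n.+1; set b := f n; set c := g n.+1; set d := g n.
set X := \sum_(i < N) \sum_(k < 2 * L) dx * dv * ((a i k - b i k) * a i k / (chi1 k * rs)
              + (c i k - d i k) * c i k * rs / chi2 k).
have H1 : dotD dx dv rs chi1 chi2 (a, c) (a, c) - dotD dx dv rs chi1 chi2 (b, d) (b, d) <= 2 * X.
  rewrite -subr_ge0.
  have -> : 2 * X - (dotD dx dv rs chi1 chi2 (a, c) (a, c) - dotD dx dv rs chi1 chi2 (b, d) (b, d))
    = \sum_(i < N) \sum_(k < 2 * L) dx * dv * ((a i k - b i k) ^+ 2 / (chi1 k * rs)
              + (c i k - d i k) ^+ 2 * rs / chi2 k).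
    rewrite /X /dotD !mulr_sumr -!sumrB; apply: eq_bigr => i _.
    rewrite !mulr_sumr -!sumrB; apply: eq_bigr => k _ /=.
    have := c1 k; rewrite lt0r => /andP [ck1 _].
    have := c2 k; rewrite lt0r => /andP [ck2 _].
    field; apply/and3P; split => //.
  apply: sumr_ge0 => i _; apply: sumr_ge0 => k _.
  apply: mulr_ge0; first by apply: mulr_ge0; exact: ltW.
  apply: addr_ge0.
  - by apply: divr_ge0; [exact: sqr_ge0 | apply: mulr_ge0; exact: ltW].
  - by apply: divr_ge0; [apply: mulr_ge0; [exact: sqr_ge0 | exact: ltW] | exact: ltW].
set Pd := fun i => dens dv a i.
set Qd := fun i => dens dv c i.
set Coll := \sum_(i < N) \sum_(k < 2 * L) dx * dv * ((- rs * chi1 k * Qd i - rs^-1 * a i k) * a i k / (chi1 k * rs)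
       + (- rs^-1 * chi2 k * Pd i - rs * c i k) * c i k * rs / chi2 k).
set Flux := \sum_(i < N) \sum_(k < 2 * L)
   ((LFflux dx dv dt a i k - LFflux dx dv dt a (ord_pred i) k) * a i k / (chi1 k * rs)
  + (LFflux dx dv dt c i k - LFflux dx dv dt c (ord_pred i) k) * c i k * rs / chi2 k).
have H2 : X = dt * Coll - dt * Flux.
  rewrite /X /Coll /Flux !mulr_sumr -!sumrB; apply: eq_bigr => i _.
  rewrite !mulr_sumr -!sumrB; apply: eq_bigr => k _.
  have [Hf Hg] := Hs n i k.
  have ef : a i k - b i k = dt * ((- rs * chi1 k * dens dv (g n.+1) i - rs^-1 * f n.+1 i k)
     - (LFflux dx dv dt (f n.+1) i k - LFflux dx dv dt (f n.+1) (ord_pred i) k) / (dx * dv)).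
    by rewrite /a /b -Hf addrK mulrC divfK.
  have eg : c i k - d i k = dt * ((- rs^-1 * chi2 k * dens dv (f n.+1) i - rs * g n.+1 i k)
     - (LFflux dx dv dt (g n.+1) i k - LFflux dx dv dt (g n.+1) (ord_pred i) k) / (dx * dv)).
    by rewrite /c /d -Hg addrK mulrC divfK.
  rewrite ef eg /Pd /Qd /a /c /=.
  have := c1 k; rewrite lt0r => /andP [ck1 _].
  have := c2 k; rewrite lt0r => /andP [ck2 _].
  field; apply/and5P; split => //.
have H3 : 0 <= Flux.
  rewrite /Flux exchange_big /=; apply: sumr_ge0 => k _.
  rewrite big_split /=; apply: addr_ge0.
  - have -> : \sum_(i < N) (LFflux dx dv dt a i k - LFflux dx dv dt a (ord_pred i) k) * a i k / (chi1 k * rs)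
      = (chi1 k * rs)^-1 * \sum_(i < N) (LFflux dx dv dt a i k - LFflux dx dv dt a (ord_pred i) k) * a i k.
      by rewrite mulr_sumr; apply: eq_bigr => i _; rewrite mulrC.
    apply: mulr_ge0; first by rewrite invr_ge0; apply: mulr_ge0; apply: ltW.
    apply: (@flux_nonneg _ _ dv (vel dv k) (dx / (2 * dt)) (fun i => a i k) (fun i => LFflux dx dv dt a i k)).
    + exact: ltW.
    + by apply: divr_ge0; [exact: ltW | apply: mulr_ge0 => //; exact: ltW].
    + by [].
  - have -> : \sum_(i < N) (LFflux dx dv dt c i k - LFflux dx dv dt c (ord_pred i) k) * c i k * rs / chi2 k
      = (rs / chi2 k) * \sum_(i < N) (LFflux dx dv dt c i k - LFflux dx dv dt c (ord_pred i) k) * c i k.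
      by rewrite mulr_sumr; apply: eq_bigr => i _; rewrite -mulrA mulrC.
    apply: mulr_ge0; first by apply: divr_ge0; apply: ltW.
    apply: (@flux_nonneg _ _ dv (vel dv k) (dx / (2 * dt)) (fun i => c i k) (fun i => LFflux dx dv dt c i k)).
    + exact: ltW.
    + by apply: divr_ge0; [exact: ltW | apply: mulr_ge0 => //; exact: ltW].
    + by [].
have H4 : Coll + m * dotD dx dv rs chi1 chi2 (IminusPiD dv rs chi1 chi2 (a, c))
   (IminusPiD dv rs chi1 chi2 (a, c)) <= 0.
  rewrite /Coll /dotD /IminusPiD /PiD /= mulr_sumr -big_split /=; apply: sumr_le0 => i _.
  apply: (@coll_i _ _ dx dv rs m (Pd i) (Qd i) ((dens dv a i - dens dv c i)/(rs^+2+1)) chi1 chi2 (a i) (c i)) => //.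
  exact: ltW.
have H5 : dt * (Coll + m * dotD dx dv rs chi1 chi2 (IminusPiD dv rs chi1 chi2 (a, c))
   (IminusPiD dv rs chi1 chi2 (a, c))) <= 0.
  by rewrite pmulr_rle0.
have H6 : 0 <= dt * Flux by apply: mulr_ge0 => //; exact: ltW.
rewrite mulrDr mulrA in H5.
rewrite H2 in H1.
lra.
Qed.
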